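(* Let $\mathcal{A}$ and $\mathcal{B}$ be $C^{*}$-algebras, let $\Xi$ be a Hilbert $\mathcal{A}$-module and $\nabla$ a Hilbert $\mathcal{B}$-module. Let $f:\Xi \rightarrow \nabla$ be a mapping for which there exists a function $\varphi:\Xi^{3}\rightarrow[0,\infty)$ such that $$\| f(\mu x+y)-\mu f(x)-f(y)\| \leq \varphi(x,y,0),$$ $$\| f(\langle x,y\rangle z)-\langle f(x),f(y)\rangle f(z)\| \leq \varphi(x,y,z),$$ $$\| f(\langle x,y\rangle^{*} z)-\langle f(x),f(y)\rangle^{*} f(z)\| \leq \varphi(x,y,z)$$ for all $x,y,z\in\Xi$ and all $\mu\in\mathbb{T}$. If there exists $0\leq L<1$ such that $\varphi(x,y,z)\leq 2L\,\varphi\left(\frac{x}{2},\frac{y}{2},\frac{z}{2}\right)$ for all $x,y,z\in\Xi$, then there exists a unique Hilbert $C^{*}$-module $\ast$-homomorphism $H:\Xi\rightarrow\nabla$ such that $$\|f(x)-H(x)\|\leq \frac{1}{2-2L}\varphi(x,x,0)$$ for all $x\in\Xi$.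
   Context: $\mathbb{T}=\{z\in\mathbb{C}:|z|=1\}$. For a $C^{*}$-algebra $\mathcal{A}$, a (left) Hilbert $\mathcal{A}$-module is a complex linear space $\Xi$ with a compatible left $\mathcal{A}$-module action ($\lambda(ax)=(\lambda a)x=a(\lambda x)$) and a map $\langle\cdot,\cdot\rangle:\Xi\times\Xi\to\mathcal{A}$ that is linear in the first variable, satisfies $\langle ax,y\rangle=a\langle x,y\rangle$, $\langle x,y\rangle^{*}=\langle y,x\rangle$, $\langle x,x\rangle\geq 0$ with equality iff $x=0$, and such that $\Xi$ is complete in the norm $\|x\|=\|\langle x,x\rangle\|^{1/2}$. For a Hilbert $\mathcal{A}$-module $\Xi$ and a Hilbert $\mathcal{B}$-module $\nabla$, a Hilbert $C^{*}$-module homomorphism is a $\mathbb{C}$-linear map $H:\Xi\to\nabla$ with $H(\langle x,y\rangle z)=\langle H(x),H(y)\rangle H(z)$ for all $x,y,z\in\Xi$; it is a Hilbert $C^{*}$-module $\ast$-homomorphism if moreover $H(\langle x,y\rangle^{*} z)=\langle H(x),H(y)\rangle^{*} H(z)$ for all $x,y,z\in\Xi$. *)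

(* Defs.v *)
From Stdlib Require Import Reals.
From Coquelicot Require Import Coquelicot.
Open Scope R_scope.

Record CStarAlgebra := {
  ca_car :> CompleteNormedModule C_AbsRing;
  ca_mul : ca_car -> ca_car -> ca_car;
  ca_star : ca_car -> ca_car;
  ca_mulA : forall a b c, ca_mul a (ca_mul b c) = ca_mul (ca_mul a b) c;
  ca_mulDl : forall a b c, ca_mul (plus a b) c = plus (ca_mul a c) (ca_mul b c);
  ca_mulDr : forall a b c, ca_mul a (plus b c) = plus (ca_mul a b) (ca_mul a c);
  ca_mulZl : forall (l : C) a b, ca_mul (scal l a) b = scal l (ca_mul a b);
  ca_mulZr : forall (l : C) a b, ca_mul a (scal l b) = scal l (ca_mul a b);
  ca_starK : forall a, ca_star (ca_star a) = a;
  ca_starD : forall a b, ca_star (plus a b) = plus (ca_star a) (ca_star b);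
  ca_starZ : forall (l : C) a, ca_star (scal l a) = scal (Cconj l) (ca_star a);
  ca_starM : forall a b, ca_star (ca_mul a b) = ca_mul (ca_star b) (ca_star a);
  ca_norm_mul : forall a b, norm (ca_mul a b) <= norm a * norm b;
  ca_cstar : forall a, norm (ca_mul (ca_star a) a) = norm a * norm a
}.

Definition ca_pos (A : CStarAlgebra) (a : A) : Prop :=
  exists b : A, a = ca_mul A (ca_star A b) b.

Record HilbertModule (A : CStarAlgebra) := {
  hm_car :> CompleteNormedModule C_AbsRing;
  hm_act : A -> hm_car -> hm_car;
  hm_ip : hm_car -> hm_car -> A;
  hm_actDl : forall (a b : A) x, hm_act (plus a b) x = plus (hm_act a x) (hm_act b x);
  hm_actDr : forall (a : A) x y, hm_act a (plus x y) = plus (hm_act a x) (hm_act a y);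
  hm_actM : forall (a b : A) x, hm_act (ca_mul A a b) x = hm_act a (hm_act b x);
  hm_actZl : forall (l : C) (a : A) x, scal l (hm_act a x) = hm_act (scal l a) x;
  hm_actZr : forall (l : C) (a : A) x, scal l (hm_act a x) = hm_act a (scal l x);
  hm_ipDl : forall x y z, hm_ip (plus x y) z = plus (hm_ip x z) (hm_ip y z);
  hm_ipZl : forall (l : C) x y, hm_ip (scal l x) y = scal l (hm_ip x y);
  hm_ipAl : forall (a : A) x y, hm_ip (hm_act a x) y = ca_mul A a (hm_ip x y);
  hm_ip_star : forall x y, ca_star A (hm_ip x y) = hm_ip y x;
  hm_ip_pos : forall x, ca_pos A (hm_ip x x);
  hm_ip_eq0 : forall x, hm_ip x x = zero <-> x = zero;
  hm_norm : forall x, norm x = sqrt (norm (hm_ip x x))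
}.

Arguments hm_act {A} h _ _.
Arguments hm_ip {A} h _ _.

Definition is_hm_star_hom {A B : CStarAlgebra} (X : HilbertModule A)
    (Y : HilbertModule B) (H : X -> Y) : Prop :=
  (forall x y, H (plus x y) = plus (H x) (H y)) /\
  (forall (l : C) x, H (scal l x) = scal l (H x)) /\
  (forall x y z, H (hm_act X (hm_ip X x y) z) = hm_act Y (hm_ip Y (H x) (H y)) (H z)) /\
  (forall x y z, H (hm_act X (ca_star A (hm_ip X x y)) z)
                 = hm_act Y (ca_star B (hm_ip Y (H x) (H y))) (H z)).

(* Main.v *)
Require Import Defs.
From Stdlib Require Import Reals.
From Coquelicot Require Import Coquelicot.
Open Scope R_scope.
Require Import Defs.
From Stdlib Require Import ZArith.
From Stdlib Require Import Reals Lra Lia.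
From Coquelicot Require Import Coquelicot.
Open Scope R_scope.

Section Grp.
Context {G : AbelianGroup}.
Lemma minus_split (a b c : G) : minus a b = plus (minus a c) (minus c b).
Proof.
unfold minus. rewrite <- plus_assoc, (plus_assoc (opp c)), plus_opp_l, plus_zero_l. easy.
Qed.

Lemma minus_pp (a b c d : G) : minus (plus a b) (plus c d) = plus (minus a c) (minus b d).
Proof.
unfold minus. rewrite opp_plus.
rewrite <- !plus_assoc. f_equal. rewrite (plus_comm b), <- plus_assoc. f_equal. apply plus_comm.
Qed.

Lemma minus0_eq (a b : G) : minus a b = zero -> a = b.
Proof.
intro H. apply (plus_reg_r (opp b)). rewrite plus_opp_r. exact H.
Qed.

Lemma minus_plus_cancel (x y : G) : plus (minus x y) y = x.
Proof. unfold minus. rewrite <- plus_assoc, plus_opp_l, plus_zero_r. easy. Qed.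
End Grp.

Section NM.
Context {V : CompleteNormedModule C_AbsRing}.
Notation NMV := (CompleteNormedModule.NormedModule C_AbsRing V).
Notation MSV := (CompleteNormedModule.ModuleSpace C_AbsRing V).

Lemma ntr (x y : V) : norm (plus x y) <= norm x + norm y.
Proof. apply (@norm_triangle _ NMV). Qed.
Lemma nopp (x : V) : norm (opp x) = norm x.
Proof. apply (@norm_opp _ NMV). Qed.
Lemma nge0 (x : V) : 0 <= norm x.
Proof. apply (@norm_ge_0 _ NMV). Qed.

Lemma ntri (a b c : V) : norm (minus a b) <= norm (minus a c) + norm (minus c b).
Proof. eapply Rle_trans; [apply Req_le, f_equal, (minus_split a b c)|apply ntr]. Qed.

Lemma nsym (a b : V) : norm (minus a b) = norm (minus b a).
Proof. rewrite <- opp_minus, nopp. easy. Qed.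

Lemma npp (a b c d : V) : norm (minus (plus a b) (plus c d)) <= norm (minus a c) + norm (minus b d).
Proof. eapply Rle_trans; [apply Req_le, f_equal, (minus_pp a b c d)|apply ntr]. Qed.

Lemma nscal (l : C) (x : V) : norm (scal l x) <= Cmod l * norm x.
Proof. apply (@norm_scal _ NMV l x). Qed.

Lemma nscalR (r : R) (x : V) : norm (scal (RtoC r) x) <= Rabs r * norm x.
Proof. rewrite <- Cmod_R. apply nscal. Qed.

Lemma nscal_minus (l : C) (x y : V) : norm (minus (scal l x) (scal l y)) <= Cmod l * norm (minus x y).
Proof. rewrite <- (@scal_minus_distr_l _ MSV). apply nscal. Qed.

Lemma neq0 (x : V) : norm x = 0 -> x = zero.
Proof. apply (@norm_eq_zero _ NMV). Qed.
Lemma nzero : norm (@zero V) = 0.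
Proof. apply (@norm_zero _ NMV). Qed.

Lemma nle_tri (x y : V) : norm x <= norm (minus x y) + norm y.
Proof. eapply Rle_trans; [apply Req_le, f_equal, eq_sym, (minus_plus_cancel x y)|apply ntr]. Qed.

Lemma nmee (a : V) : norm (minus a a) = 0.
Proof. rewrite (@minus_eq_zero (CompleteNormedModule.AbelianGroup C_AbsRing V)). apply (@norm_zero _ NMV). Qed.

Lemma nminus (a b : V) : norm (minus a b) <= norm a + norm b.
Proof. eapply Rle_trans. apply ntr. rewrite nopp. lra. Qed.

Lemma norm0_eq (a b : V) : norm (minus a b) <= 0 -> a = b.
Proof. intro H. apply minus0_eq, (@norm_eq_zero _ NMV). generalize (nge0 (minus a b)). lra. Qed.

End NM.

Lemma pow_le_1 (x : R) (n : nat) : 0 <= x <= 1 -> x ^ n <= 1.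
Proof.
intro H. induction n as [|n IH]; simpl. lra.
assert (0 <= x ^ n) by (apply pow_le; lra). nra.
Qed.

Lemma small_pow (L K d : R) : 0 <= L < 1 -> (forall n, d <= K * L ^ n) -> d <= 0.
Proof.
intros HL H. apply Rle_plus_epsilon; intros eps Heps.
assert (HK0 : d <= K) by (generalize (H 0%nat); simpl; lra).
destruct (Rle_lt_dec K 0) as [HK|HK]; [lra|].
destruct (pow_lt_1_zero L ltac:(rewrite Rabs_right; lra) (eps / K)) as [N HN].
{ apply Rdiv_lt_0_compat; lra. }
specialize (HN N (le_n N)). rewrite Rabs_right in HN by (apply Rle_ge, pow_le; lra).
specialize (H N). apply Rmult_lt_compat_l with (r := K) in HN; [|lra].
replace (K * (eps / K)) with eps in HN by (field; lra). lra.
Qed.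

Section Lim.
Context {V : CompleteNormedModule C_AbsRing}.

Lemma cauchy_lim (u : nat -> V) (b : nat -> R) :
  (forall n k, norm (minus (u (n + k)%nat) (u n)) <= b n) ->
  (forall eps, 0 < eps -> exists N, b N < eps) ->
  forall n, norm (minus (u n) (lim (filtermap u eventually))) <= b n.
Proof.
intros Hc Hb.
set (F := filtermap u eventually).
assert (PF : ProperFilter F) by (apply filtermap_proper_filter, eventually_filter).
assert (CF : cauchy F).
{ intro eps. destruct (Hb eps (cond_pos eps)) as [N HN]. exists (u N).
  exists N. intros m Hm. apply (@norm_compat1 C_AbsRing V).
  replace m with (N + (m - N))%nat by lia. eapply Rle_lt_trans; [apply Hc|exact HN]. }
intro n. apply Rle_plus_epsilon; intros eps Heps.
assert (Hnf := @norm_factor_gt_0 _ V).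
set (nf := @norm_factor C_AbsRing V) in *.
assert (He : 0 < eps / nf) by (apply Rdiv_lt_0_compat; lra).
destruct (complete_cauchy F PF CF (mkposreal _ He)) as [N HN].
specialize (HN (n + N)%nat ltac:(lia)).
apply (@norm_compat2 C_AbsRing V) in HN. simpl in HN.
change (norm (minus (u (n + N)%nat) (lim F)) < nf * (eps / nf)) in HN.
replace (nf * (eps / nf)) with eps in HN by (field; lra).
eapply Rle_trans. apply (ntri _ _ (u (n + N)%nat)).
rewrite nsym. apply Rplus_le_compat; [apply Hc|apply Rlt_le, HN].
Qed.
End Lim.

Section Additive.
Context {G1 G2 : AbelianGroup} (g : G1 -> G2)
  (Hg : forall a b, g (plus a b) = plus (g a) (g b)).

Lemma add_zero : g zero = zero.
Proof.
apply (plus_reg_l (g zero)). rewrite <- Hg, !plus_zero_r. easy.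
Qed.

Lemma add_opp a : g (opp a) = opp (g a).
Proof.
apply (plus_reg_l (g a)). rewrite <- Hg, !plus_opp_r. apply add_zero.
Qed.

Lemma add_minus a b : g (minus a b) = minus (g a) (g b).
Proof. unfold minus. rewrite Hg, add_opp. easy. Qed.
End Additive.

Lemma plus_ac4 {G : AbelianGroup} (a b c d : G) :
  plus (plus a b) (plus c d) = plus (plus a c) (plus b d).
Proof.
rewrite <- !plus_assoc. f_equal. rewrite !plus_assoc. f_equal. apply plus_comm.
Qed.

Lemma RtoC_conj (r : R) : Cconj (RtoC r) = RtoC r.
Proof. unfold Cconj, RtoC. simpl. f_equal. ring. Qed.

Section CStar.
Variable A : CStarAlgebra.
Notation st := (ca_star A).
Notation mul := (ca_mul A).

Lemma st_plus (a b : A) : st (plus a b) = plus (st a) (st b).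
Proof. apply ca_starD. Qed.

Lemma st_zero : st zero = zero.
Proof. apply (add_zero st st_plus). Qed.

Lemma st_minus (a b : A) : st (minus a b) = minus (st a) (st b).
Proof. apply (add_minus st st_plus). Qed.

Lemma norm_st_le (a : A) : norm a <= norm (st a).
Proof.
assert (H := ca_cstar A a). assert (H2 := ca_norm_mul A (st a) a).
assert (H0 := norm_ge_0 a). assert (H1 := norm_ge_0 (st a)).
destruct (Req_dec (norm a) 0) as [E|E]. lra.
nra.
Qed.

Lemma norm_st (a : A) : norm (st a) = norm a.
Proof.
apply Rle_antisym; [|apply norm_st_le].
rewrite <- (ca_starK A a) at 2. apply norm_st_le.
Qed.

Lemma norm_st_minus (a b : A) : norm (minus (st a) (st b)) = norm (minus a b).
Proof. rewrite <- st_minus. apply norm_st. Qed.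

Lemma mul_plus_l (a b c : A) : mul (plus a b) c = plus (mul a c) (mul b c).
Proof. apply ca_mulDl. Qed.
Lemma mul_plus_r (a b c : A) : mul a (plus b c) = plus (mul a b) (mul a c).
Proof. apply ca_mulDr. Qed.
End CStar.

Section HM.
Variable A : CStarAlgebra.
Variable X : HilbertModule A.
Notation act := (hm_act X).
Notation ip := (hm_ip X).
Notation st := (ca_star A).
Notation mul := (ca_mul A).

Lemma act_plus_l (a b : A) (x : X) : act (plus a b) x = plus (act a x) (act b x).
Proof. apply hm_actDl. Qed.
Lemma act_plus_r (a : A) (x y : X) : act a (plus x y) = plus (act a x) (act a y).
Proof. apply hm_actDr. Qed.
Lemma act_minus_l (a b : A) (x : X) : act (minus a b) x = minus (act a x) (act b x).
Proof. apply (add_minus (fun a => act a x)). intros; apply act_plus_l. Qed.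
Lemma act_minus_r (a : A) (x y : X) : act a (minus x y) = minus (act a x) (act a y).
Proof. apply (add_minus (act a)). intros; apply act_plus_r. Qed.
Lemma act_zero_r (a : A) : act a zero = zero.
Proof. apply (add_zero (act a)). intros; apply act_plus_r. Qed.
Lemma act_scal_r (a : A) (l : C) (x : X) : act a (scal l x) = scal l (act a x).
Proof. symmetry. apply hm_actZr. Qed.
Lemma act_scal_l (a : A) (l : C) (x : X) : act (scal l a) x = scal l (act a x).
Proof. symmetry. apply hm_actZl. Qed.

Lemma ip_plus_l (x y z : X) : ip (plus x y) z = plus (ip x z) (ip y z).
Proof. apply hm_ipDl. Qed.
Lemma ip_minus_l (x y z : X) : ip (minus x y) z = minus (ip x z) (ip y z).
Proof. apply (add_minus (fun x => ip x z)). intros; apply ip_plus_l. Qed.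
Lemma ip_zero_l (z : X) : ip zero z = zero.
Proof. apply (add_zero (fun x => ip x z)). intros; apply ip_plus_l. Qed.
Lemma ip_opp_l (x z : X) : ip (opp x) z = opp (ip x z).
Proof. apply (add_opp (fun x => ip x z)). intros; apply ip_plus_l. Qed.
Lemma ip_scal_l (l : C) (x y : X) : ip (scal l x) y = scal l (ip x y).
Proof. apply hm_ipZl. Qed.

Lemma ip_plus_r (x y z : X) : ip x (plus y z) = plus (ip x y) (ip x z).
Proof.
rewrite <- (hm_ip_star _ X (plus y z) x), ip_plus_l, st_plus, !hm_ip_star. easy.
Qed.
Lemma ip_minus_r (x y z : X) : ip x (minus y z) = minus (ip x y) (ip x z).
Proof. apply (add_minus (ip x)). intros; apply ip_plus_r. Qed.
Lemma ip_zero_r (z : X) : ip z zero = zero.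
Proof. apply (add_zero (ip z)). intros; apply ip_plus_r. Qed.
Lemma ip_opp_r (x z : X) : ip z (opp x) = opp (ip z x).
Proof. apply (add_opp (ip z)). intros; apply ip_plus_r. Qed.
Lemma ip_scal_r (l : C) (x y : X) : ip x (scal l y) = scal (Cconj l) (ip x y).
Proof.
rewrite <- (hm_ip_star _ X (scal l y) x), ip_scal_l, ca_starZ, hm_ip_star. easy.
Qed.

Lemma norm_ip_self (v : X) : norm (ip v v) = norm v * norm v.
Proof.
rewrite (hm_norm _ X v). rewrite sqrt_sqrt. easy. apply norm_ge_0.
Qed.

Lemma norm_act (a : A) (v : X) : norm (act a v) <= norm a * norm v.
Proof.
assert (E : ip (act a v) (act a v) = mul a (mul (ip v v) (st a))).
{ rewrite hm_ipAl. f_equal.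
  rewrite <- (hm_ip_star _ X (act a v) v), hm_ipAl, ca_starM, hm_ip_star. easy. }
assert (H1 := norm_ip_self (act a v)). rewrite E in H1.
assert (H2 := ca_norm_mul A a (mul (ip v v) (st a))).
assert (H3 := ca_norm_mul A (ip v v) (st a)).
rewrite norm_st, norm_ip_self in H3.
assert (H4 := norm_ge_0 a). assert (H5 := norm_ge_0 v). assert (H6 := norm_ge_0 (act a v)).
assert (H7 : norm (act a v) * norm (act a v) <= (norm a * norm v) * (norm a * norm v)).
{ rewrite <- H1. eapply Rle_trans. apply H2. 
  replace ((norm a * norm v) * (norm a * norm v)) with (norm a * (norm v * norm v * norm a)) by ring.
  apply Rmult_le_compat_l; auto. }
assert (H8 : 0 <= norm a * norm v) by (apply Rmult_le_pos; auto).
revert H6 H7 H8. generalize (norm (act a v)) (norm a * norm v). intros p q. nra.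
Qed.
End HM.

Lemma mdef {G : AbelianGroup} (x y : G) : minus x y = plus x (opp y).
Proof. reflexivity. Qed.

Lemma grp_pol {G : AbelianGroup} (P Q R S : G) :
  minus (plus (plus P Q) (plus R S)) (minus (minus P Q) (minus R S)) = plus (plus Q R) (plus Q R).
Proof.
assert (E1 : minus (minus P Q) (minus R S) = plus (plus P (opp Q)) (plus (opp R) S)).
{ rewrite !mdef, opp_plus, opp_opp. easy. }
rewrite E1, minus_pp, (minus_pp P Q), (minus_pp R S). rewrite (mdef Q), (mdef R), !opp_opp, !minus_eq_zero.
rewrite plus_zero_l, plus_zero_r. apply plus_ac4.
Qed.

Lemma plus_half (V : CompleteNormedModule C_AbsRing) (a : V) : norm a <= / 2 * norm (plus a a).
Proof.
assert (E : a = scal (RtoC (/2)) (plus a a)).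
{ rewrite (@scal_distr_l _ (CompleteNormedModule.ModuleSpace C_AbsRing V)).
  rewrite <- (@scal_distr_r _ (CompleteNormedModule.ModuleSpace C_AbsRing V)).
  transitivity (@scal _ (CompleteNormedModule.ModuleSpace C_AbsRing V) (@one C_Ring) a).
  symmetry. apply (@scal_one _ (CompleteNormedModule.ModuleSpace C_AbsRing V)).
  f_equal. apply injective_projections; simpl; field. }
rewrite E at 1. eapply Rle_trans. apply nscalR. rewrite Rabs_right; lra.
Qed.

Section HM2.
Variable A : CStarAlgebra.
Variable X : HilbertModule A.
Notation act := (hm_act X).
Notation ip := (hm_ip X).

Definition Tp (x y : X) : A := plus (ip x y) (ip y x).

Lemma Tp_bound (x y : X) : norm (Tp x y) <= (norm x + norm y) * (norm x + norm y).
Proof.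
assert (E : plus (Tp x y) (Tp x y) = minus (ip (plus x y) (plus x y)) (ip (minus x y) (minus x y))).
{ rewrite !ip_plus_l, !ip_plus_r, !ip_minus_l, !ip_minus_r. unfold Tp. symmetry. apply (grp_pol (ip x x) (ip x y) (ip y x) (ip y y)). }
eapply Rle_trans. apply plus_half. rewrite E.
eapply Rle_trans. apply Rmult_le_compat_l. lra. apply nminus.
rewrite !norm_ip_self.
assert (H1 := ntr x y).
assert (H2 := nminus x y).
assert (H3 := nge0 (plus x y)). assert (H4 := nge0 (minus x y)).
nra.
Qed.
End HM2.

Section MS.
Context {V : CompleteNormedModule C_AbsRing}.
Notation MSV := (CompleteNormedModule.ModuleSpace C_AbsRing V).

Lemma scal_id (a : C) (u : V) : a = RtoC 1 -> scal a u = u.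
Proof. intros ->. apply (@scal_one _ MSV). Qed.
Lemma scal_m1 (a : C) (u : V) : a = RtoC (-1) -> scal a u = opp u.
Proof.
intros ->. transitivity (@scal _ MSV (opp (@one C_Ring)) u).
f_equal. apply injective_projections; simpl; ring.
apply (@scal_opp_one _ MSV).
Qed.
Lemma sdl (l : C) (u v : V) : scal l (plus u v) = plus (scal l u) (scal l v).
Proof. apply (@scal_distr_l _ MSV). Qed.
Lemma sdr (a b : C) (u : V) : scal (Cplus a b) u = plus (scal a u) (scal b u).
Proof. apply (@scal_distr_r _ MSV). Qed.
Lemma sas (a b : C) (u : V) : scal a (scal b u) = scal (Cmult a b) u.
Proof. apply (@scal_assoc _ MSV). Qed.
Lemma smi (l : C) (u v : V) : scal l (minus u v) = minus (scal l u) (scal l v).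
Proof. apply (@scal_minus_distr_l _ MSV). Qed.
Lemma szr (l : C) : scal l (@zero V) = zero.
Proof. apply (@scal_zero_r _ MSV). Qed.
Lemma szl (u : V) : scal (RtoC 0) u = zero.
Proof. apply (@scal_zero_l _ MSV). Qed.
Lemma sext (a b : C) (u : V) : a = b -> scal a u = scal b u.
Proof. intros ->; easy. Qed.

Notation AGV := (CompleteNormedModule.AbelianGroup C_AbsRing V).
Lemma pac4 (a b c d : V) : plus (plus a b) (plus c d) = plus (plus a c) (plus b d).
Proof. apply (@plus_ac4 AGV). Qed.
Lemma popr (a : V) : plus a (opp a) = zero.
Proof. apply (@plus_opp_r AGV). Qed.
Lemma pzr (a : V) : plus a zero = a.
Proof. apply (@plus_zero_r AGV). Qed.
Lemma pzl (a : V) : plus zero a = a.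
Proof. apply (@plus_zero_l AGV). Qed.
Lemma pcom (a b : V) : plus a b = plus b a.
Proof. apply (@plus_comm AGV). Qed.
Lemma pass (a b c : V) : plus a (plus b c) = plus (plus a b) c.
Proof. apply (@plus_assoc AGV). Qed.
Lemma mpp (a b c d : V) : minus (plus a b) (plus c d) = plus (minus a c) (minus b d).
Proof. apply (@minus_pp AGV). Qed.
Lemma mspl (a b c : V) : minus a b = plus (minus a c) (minus c b).
Proof. apply (@minus_split AGV). Qed.
Lemma mzr (a : V) : minus a zero = a.
Proof. apply (@minus_zero_r AGV). Qed.
Lemma mee (a : V) : minus a a = zero.
Proof. apply (@minus_eq_zero AGV). Qed.

Lemma pol_alg (P Q : V) :
  plus P P = plus (plus P Q) (scal Ci (plus (scal (Cconj Ci) P) (scal Ci Q))).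
Proof.
rewrite sdl, !sas.
rewrite (scal_id _ P), (scal_m1 _ Q).
2,3: apply injective_projections; simpl; ring.
rewrite pac4, popr, pzr. easy.
Qed.
End MS.

Section HM3.
Variable A : CStarAlgebra.
Variable X : HilbertModule A.
Notation act := (hm_act X).
Notation ip := (hm_ip X).

Lemma ip_bound1 (x y : X) : norm (ip x y) <= (norm x + norm y) * (norm x + norm y).
Proof.
assert (E : plus (ip x y) (ip x y) = plus (Tp A X x y) (scal Ci (Tp A X x (scal Ci y)))).
{ unfold Tp. rewrite ip_scal_r, ip_scal_l. apply pol_alg. }
eapply Rle_trans. apply plus_half. rewrite E.
eapply Rle_trans. apply Rmult_le_compat_l. lra. apply ntr.
eapply Rle_trans. apply Rmult_le_compat_l. lra. apply Rplus_le_compat_l. apply nscal.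
assert (Hi : Cmod Ci = 1). { unfold Cmod, Ci. simpl. replace (0 * (0 * 1) + 1 * (1 * 1)) with 1 by ring. apply sqrt_1. }
rewrite Hi, Rmult_1_l.
assert (H1 := Tp_bound A X x y). assert (H2 := Tp_bound A X x (scal Ci y)).
assert (H3 : norm (scal Ci y) <= norm y). { eapply Rle_trans. apply nscal. rewrite Hi. lra. }
assert (H4 := nge0 x). assert (H5 := nge0 (scal Ci y)).
assert (H6 : (norm x + norm (scal Ci y)) * (norm x + norm (scal Ci y)) <= (norm x + norm y) * (norm x + norm y)).
{ apply Rmult_le_compat; lra. }
lra.
Qed.
End HM3.

Section HM4.
Variable A : CStarAlgebra.
Variable X : HilbertModule A.
Notation act := (hm_act X).
Notation ip := (hm_ip X).

Lemma ip_bound (u v : X) : norm (ip u v) <= 4 * norm u * norm v.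
Proof.
assert (Hu := nge0 u). assert (Hv := nge0 v).
destruct (Req_dec (norm u) 0) as [E|E].
{ apply neq0 in E. rewrite E, ip_zero_l, !nzero. nra. }
destruct (Req_dec (norm v) 0) as [F|F].
{ apply neq0 in F. rewrite F, ip_zero_r, !nzero. nra. }
set (a := sqrt (norm u)). set (b := sqrt (norm v)).
assert (Ha : 0 < a) by (apply sqrt_lt_R0; lra).
assert (Hb : 0 < b) by (apply sqrt_lt_R0; lra).
assert (Ea : norm u = a * a) by (symmetry; apply sqrt_sqrt; lra).
assert (Eb : norm v = b * b) by (symmetry; apply sqrt_sqrt; lra).
set (t := b / a).
assert (Ht : 0 < t) by (apply Rdiv_lt_0_compat; lra).
assert (E1 : ip u v = ip (scal (RtoC t) u) (scal (RtoC (/ t)) v)).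
{ rewrite ip_scal_l, ip_scal_r, RtoC_conj, sas. symmetry. apply scal_id.
  apply injective_projections; simpl; field; lra. }
rewrite E1. eapply Rle_trans. apply ip_bound1.
assert (H1 := nscalR t u). assert (H2 := nscalR (/ t) v).
rewrite Rabs_right in H1 by lra. rewrite Rabs_right in H2 by (apply Rle_ge, Rlt_le, Rinv_0_lt_compat; lra).
assert (H3 := nge0 (scal (RtoC t) u)). assert (H4 := nge0 (scal (RtoC (/ t)) v)).
assert (H5 : norm (scal (RtoC t) u) + norm (scal (RtoC (/ t)) v) <= 2 * a * b).
{ rewrite Ea in H1. rewrite Eb in H2. unfold t in H1, H2.
  replace (b / a * (a * a)) with (a * b) in H1 by (field; lra).
  replace (/ (b / a) * (b * b)) with (a * b) in H2 by (field; lra).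
  eapply Rle_trans; [apply Rplus_le_compat; [apply H1|apply H2]|lra]. }
rewrite Ea, Eb.
apply Rle_trans with ((2 * a * b) * (2 * a * b)).
apply Rmult_le_compat; lra.
nra.
Qed.
End HM4.

Section Tri.
Variable B : CStarAlgebra.
Variable Y : HilbertModule B.
Notation act := (hm_act Y).
Notation ip := (hm_ip Y).
Variable g : B -> B.
Hypothesis gadd : forall a b, g (plus a b) = plus (g a) (g b).
Hypothesis gnorm : forall a, norm (g a) = norm a.

Lemma tri_cont (a a' b b' c c' : Y) (da db dc : R) :
  norm (minus a' a) <= da -> norm (minus b' b) <= db -> norm (minus c' c) <= dc ->
  norm (minus (act (g (ip a' b')) c') (act (g (ip a b)) c))
  <= 4 * (norm a + da) * (norm b + db) * dc + 4 * da * (norm b + db) * norm c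
     + 4 * norm a * db * norm c.
Proof.
intros Ha Hb Hc.
assert (Na' : norm a' <= norm a + da) by (generalize (nle_tri a' a); lra).
assert (Nb' : norm b' <= norm b + db) by (generalize (nle_tri b' b); lra).
assert (P1 := nge0 a). assert (P2 := nge0 b). assert (P3 := nge0 c).
assert (P4 := nge0 a'). assert (P5 := nge0 b'). assert (P6 := nge0 (minus c' c)).
assert (P7 := nge0 (minus a' a)). assert (P8 := nge0 (minus b' b)).
rewrite Rplus_assoc. eapply Rle_trans. apply (ntri _ _ (act (g (ip a' b')) c)).
apply Rplus_le_compat.
- rewrite <- act_minus_r. eapply Rle_trans. apply norm_act.
  rewrite gnorm. eapply Rle_trans. apply Rmult_le_compat_r. apply nge0. apply ip_bound.
  apply Rle_trans with (4 * (norm a + da) * (norm b + db) * norm (minus c' c)).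
  { apply Rmult_le_compat_r. apply nge0. apply Rmult_le_compat; try nra. }
  apply Rmult_le_compat_l; [nra|lra].
- rewrite <- act_minus_l, <- (add_minus g gadd). eapply Rle_trans. apply norm_act.
  rewrite gnorm.
  assert (Q : norm (minus (ip a' b') (ip a b)) <= 4 * da * (norm b + db) + 4 * norm a * db).
  { eapply Rle_trans. apply (ntri _ _ (ip a b')).
    rewrite <- ip_minus_l, <- ip_minus_r.
    apply Rplus_le_compat.
    - eapply Rle_trans. apply ip_bound. apply Rmult_le_compat; nra.
    - eapply Rle_trans. apply ip_bound. apply Rmult_le_compat_l; nra. }
  replace (4 * da * (norm b + db) * norm c + 4 * norm a * db * norm c)
    with ((4 * da * (norm b + db) + 4 * norm a * db) * norm c) by ring.
  apply Rmult_le_compat_r. apply nge0. exact Q.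
Qed.
End Tri.

Section SC.
Context {V : CompleteNormedModule C_AbsRing}.
Lemma scR (a b : R) (u : V) : scal (RtoC a) (scal (RtoC b) u) = scal (RtoC (a * b)) u.
Proof. rewrite sas. apply sext. apply injective_projections; simpl; ring. Qed.
Lemma sc1 (u : V) : scal (RtoC 1) u = u.
Proof. apply scal_id. easy. Qed.
Lemma sc_comm (a : R) (mu : C) (u : V) : scal (RtoC a) (scal mu u) = scal mu (scal (RtoC a) u).
Proof. rewrite !sas. apply sext. apply injective_projections; simpl; ring. Qed.
Lemma sc2 (u : V) : scal (RtoC 2) u = plus u u.
Proof.
rewrite (sext _ (Cplus (RtoC 1) (RtoC 1))), sdr, sc1. easy.
apply injective_projections; simpl; ring.
Qed.
End SC.

Lemma arith3 (p a b c cx cy cz : R) : 0 <= p <= 1 -> 0 <= a -> 0 <= b -> 0 <= c ->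
  0 <= cx -> 0 <= cy -> 0 <= cz ->
  4*(a + p*cx)*(b + p*cy)*(p*cz) + 4*(p*cx)*(b+p*cy)*c + 4*a*(p*cy)*c
  <= p * (4*(a+cx)*(b+cy)*cz + 4*cx*(b+cy)*c + 4*a*cy*c).
Proof.
intros Hp Ha Hb Hc Hx Hy Hz.
assert (h1 : a + p * cx <= a + cx) by nra.
assert (h2 : b + p * cy <= b + cy) by nra.
assert (h3 : (a + p*cx)*(b + p*cy) <= (a+cx)*(b+cy)) by (apply Rmult_le_compat; nra).
assert (h4 : 4*(a + p*cx)*(b + p*cy)*(p*cz) <= p * (4*(a+cx)*(b+cy)*cz)).
{ replace (4*(a + p*cx)*(b + p*cy)*(p*cz)) with ((a + p*cx)*(b + p*cy)*(4*p*cz)) by ring.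
  replace (p * (4*(a+cx)*(b+cy)*cz)) with ((a+cx)*(b+cy)*(4*p*cz)) by ring.
  apply Rmult_le_compat_r; [repeat apply Rmult_le_pos; lra|lra]. }
assert (h5 : 4*(p*cx)*(b+p*cy)*c <= p * (4*cx*(b+cy)*c)).
{ replace (4*(p*cx)*(b+p*cy)*c) with ((b+p*cy)*(4*p*cx*c)) by ring.
  replace (p * (4*cx*(b+cy)*c)) with ((b+cy)*(4*p*cx*c)) by ring.
  apply Rmult_le_compat_r; [repeat apply Rmult_le_pos; lra|lra]. }
nra.
Qed.

Lemma G_scal (A : CStarAlgebra) (X : HilbertModule A) (gA : A -> A)
  (gAs : forall r a, gA (scal (RtoC r) a) = scal (RtoC r) (gA a)) (r : R) (x y z : X) :
  hm_act X (gA (hm_ip X (scal (RtoC r) x) (scal (RtoC r) y))) (scal (RtoC r) z)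
  = scal (RtoC (r * r * r)) (hm_act X (gA (hm_ip X x y)) z).
Proof.
rewrite ip_scal_l, ip_scal_r, RtoC_conj, (@scR (ca_car A)), gAs, act_scal_l, act_scal_r.
rewrite (@scR (hm_car A X)). easy.
Qed.



Section Main.
Context (A B : CStarAlgebra) (X : HilbertModule A) (Y : HilbertModule B)
  (f : X -> Y) (phi : X -> X -> X -> R)
  (phi_ge0 : forall x y z, 0 <= phi x y z)
  (Hadd : forall (mu : C) (x y : X), Cmod mu = 1 ->
     norm (minus (f (plus (scal mu x) y)) (plus (scal mu (f x)) (f y))) <= phi x y zero)
  (L : R) (HL0 : 0 <= L) (HL1 : L < 1)
  (Hphi : forall x y z : X,
     phi x y z <= 2 * L * phi (scal (RtoC (/ 2)) x) (scal (RtoC (/ 2)) y) (scal (RtoC (/ 2)) z)).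

Definition sn (n : nat) (x : X) : Y := scal (RtoC (/ 2 ^ n)) (f (scal (RtoC (2 ^ n)) x)).

Lemma pow2_pos n : 0 < 2 ^ n.
Proof. apply pow_lt. lra. Qed.

Lemma phi_pow n x y z :
  phi (scal (RtoC (2 ^ n)) x) (scal (RtoC (2 ^ n)) y) (scal (RtoC (2 ^ n)) z) <= (2 * L) ^ n * phi x y z.
Proof.
induction n as [|n IH].
- rewrite !pow_O, !sc1. lra.
- simpl (2 ^ S n). rewrite <- !(scR 2 (2 ^ n)).
  eapply Rle_trans. apply Hphi. rewrite !(scR (/ 2) 2).
  replace (/ 2 * 2) with 1 by field. rewrite !sc1.
  apply Rle_trans with (2 * L * ((2 * L) ^ n * phi x y z)).
  apply Rmult_le_compat_l; [lra|exact IH]. right. simpl. ring.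
Qed.

Lemma phi_pow0 n x y :
  phi (scal (RtoC (2 ^ n)) x) (scal (RtoC (2 ^ n)) y) zero <= (2 * L) ^ n * phi x y zero.
Proof. assert (h := phi_pow n x y zero). rewrite (@szr (hm_car A X)) in h. exact h. Qed.

Lemma f_double x : norm (minus (f (scal (RtoC 2) x)) (scal (RtoC 2) (f x))) <= phi x x zero.
Proof.
assert (h := Hadd (RtoC 1) x x Cmod_1). rewrite !sc1 in h. rewrite !sc2. exact h.
Qed.

Lemma pow_split n : (2 * L) ^ n = 2 ^ n * L ^ n.
Proof. apply Rpow_mult_distr. Qed.

Lemma sn_step n x : norm (minus (sn (S n) x) (sn n x)) <= L ^ n * phi x x zero / 2.
Proof.
unfold sn. simpl (2 ^ S n). rewrite <- (scR 2 (2 ^ n) x).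
set (v := scal (RtoC (2 ^ n)) x).
assert (E : scal (RtoC (/ 2 ^ n)) (f v) = scal (RtoC (/ (2 * 2 ^ n))) (scal (RtoC 2) (f v))).
{ rewrite scR. apply sext. f_equal. field. apply Rgt_not_eq, pow2_pos. }
rewrite E, <- (@smi (hm_car B Y)).
eapply Rle_trans. apply nscalR.
assert (P := pow2_pos n).
rewrite Rabs_right by (apply Rle_ge, Rlt_le, Rinv_0_lt_compat; lra).
eapply Rle_trans. apply Rmult_le_compat_l. apply Rlt_le, Rinv_0_lt_compat; lra.
eapply Rle_trans. apply f_double. apply phi_pow0.
rewrite pow_split. right. field. lra.
Qed.

Definition bnd (n : nat) (x : X) : R := L ^ n * phi x x zero / (2 - 2 * L).

Lemma sn_cauchy n k x : norm (minus (sn (n + k) x) (sn n x)) <= bnd n x.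
Proof.
assert (P := phi_ge0 x x zero).
assert (Hk : norm (minus (sn (n + k) x) (sn n x)) <= (L ^ n - L ^ (n + k)) * phi x x zero / (2 - 2 * L)).
{ induction k as [|k IH].
  - rewrite Nat.add_0_r, nmee. right. field. lra.
  - eapply Rle_trans. apply (ntri _ _ (sn (n + k) x)).
    rewrite Nat.add_succ_r. eapply Rle_trans. apply Rplus_le_compat. apply sn_step. apply IH.
    simpl (L ^ S (n + k)). right. field. lra. }
eapply Rle_trans. apply Hk. unfold bnd.
apply Rmult_le_compat_r. apply Rlt_le, Rinv_0_lt_compat. lra.
apply Rmult_le_compat_r. exact P.
assert (0 <= L ^ (n + k)) by (apply pow_le; lra). lra.
Qed.

Definition Hm (x : X) : Y := lim (filtermap (fun n => sn n x) eventually).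

Lemma Hm_bound n x : norm (minus (sn n x) (Hm x)) <= bnd n x.
Proof.
apply (cauchy_lim (fun n => sn n x) (fun n => bnd n x)).
- intros. apply sn_cauchy.
- intros eps Heps. unfold bnd.
  assert (P := phi_ge0 x x zero).
  destruct (Req_dec (phi x x zero) 0) as [E|E].
  { exists 0%nat. rewrite E. replace (L ^ 0 * 0 / (2 - 2 * L)) with 0 by (field; lra). lra. }
  set (c := phi x x zero / (2 - 2 * L)).
  assert (Hc : 0 < c) by (unfold c; apply Rdiv_lt_0_compat; lra).
  destruct (pow_lt_1_zero L ltac:(rewrite Rabs_right; lra) (eps / c)) as [N HN].
  { apply Rdiv_lt_0_compat; lra. }
  exists N. specialize (HN N (le_n N)). rewrite Rabs_right in HN by (apply Rle_ge, pow_le; lra).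
  replace (L ^ N * phi x x zero / (2 - 2 * L)) with (L ^ N * c) by (unfold c; field; lra).
  apply Rmult_lt_compat_r with (r := c) in HN; [|lra].
  replace (eps / c * c) with eps in HN by (field; lra). lra.
Qed.

Lemma sn0 x : sn 0 x = f x.
Proof. unfold sn. simpl. rewrite Rinv_1, !sc1. easy. Qed.

Lemma Hm_approx x : norm (minus (f x) (Hm x)) <= / (2 - 2 * L) * phi x x zero.
Proof.
rewrite <- sn0. eapply Rle_trans. apply Hm_bound. unfold bnd. simpl. right. field. lra.
Qed.


Lemma inv_pow_bound n (c : R) : 0 <= c -> / 2 ^ n * ((2 * L) ^ n * c) = L ^ n * c.
Proof. intros. rewrite pow_split. field. apply Rgt_not_eq, pow2_pos. Qed.

Lemma Rabs_inv_pow n : Rabs (/ 2 ^ n) = / 2 ^ n.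
Proof. apply Rabs_right, Rle_ge, Rlt_le, Rinv_0_lt_compat, pow2_pos. Qed.

Lemma sn_add_err n mu x y : Cmod mu = 1 ->
  norm (minus (sn n (plus (scal mu x) y)) (plus (scal mu (sn n x)) (sn n y))) <= L ^ n * phi x y zero.
Proof.
intro Hmu. unfold sn.
rewrite (@sdl (hm_car A X)), (@sc_comm (hm_car A X)).
rewrite <- (@sc_comm (hm_car B Y)), <- (@sdl (hm_car B Y)), <- (@smi (hm_car B Y)).
eapply Rle_trans. apply nscalR. rewrite Rabs_inv_pow.
eapply Rle_trans. apply Rmult_le_compat_l. apply Rlt_le, Rinv_0_lt_compat, pow2_pos.
eapply Rle_trans. apply (Hadd mu _ _ Hmu). apply phi_pow0.
rewrite inv_pow_bound by apply phi_ge0. lra.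
Qed.

Lemma bnd_ge0 n x : 0 <= bnd n x.
Proof.
unfold bnd. apply Rmult_le_pos. apply Rmult_le_pos. apply pow_le; lra. apply phi_ge0.
apply Rlt_le, Rinv_0_lt_compat. lra.
Qed.

Lemma Hm_addT mu x y : Cmod mu = 1 -> Hm (plus (scal mu x) y) = plus (scal mu (Hm x)) (Hm y).
Proof.
intro Hmu. set (w := plus (scal mu x) y).
apply norm0_eq.
apply (small_pow L (phi w w zero / (2 - 2 * L) + phi x y zero + phi x x zero / (2 - 2 * L)
   + phi y y zero / (2 - 2 * L))). lra.
intro n.
eapply Rle_trans. apply (ntri _ _ (sn n w)).
eapply Rle_trans. apply Rplus_le_compat_l. apply (ntri _ _ (plus (scal mu (sn n x)) (sn n y))).
assert (E1 : norm (minus (Hm w) (sn n w)) <= bnd n w) by (rewrite nsym; apply Hm_bound).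
assert (E2 := sn_add_err n mu x y Hmu).
assert (E3 : norm (minus (plus (scal mu (sn n x)) (sn n y)) (plus (scal mu (Hm x)) (Hm y)))
   <= bnd n x + bnd n y).
{ eapply Rle_trans. apply npp. apply Rplus_le_compat.
  eapply Rle_trans. apply nscal_minus. rewrite Hmu, Rmult_1_l. apply Hm_bound. apply Hm_bound. }
eapply Rle_trans. apply Rplus_le_compat. exact E1. apply Rplus_le_compat. exact E2. exact E3.
unfold bnd. right. field. lra.
Qed.


Lemma Hm_zero : Hm zero = zero.
Proof.
assert (h := Hm_addT (RtoC 1) zero zero Cmod_1).
rewrite !(@sc1 (hm_car A X)), !(@sc1 (hm_car B Y)) in h.
rewrite (@pzr (hm_car A X)) in h.
apply (plus_reg_l (Hm zero)). transitivity (Hm zero). symmetry; exact h. symmetry. apply (@pzr (hm_car B Y)).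
Qed.

Lemma Hm_plus x y : Hm (plus x y) = plus (Hm x) (Hm y).
Proof.
assert (h := Hm_addT (RtoC 1) x y Cmod_1).
rewrite (@sc1 (hm_car A X)), (@sc1 (hm_car B Y)) in h. exact h.
Qed.

Lemma Hm_scalT mu x : Cmod mu = 1 -> Hm (scal mu x) = scal mu (Hm x).
Proof.
intro Hmu. assert (h := Hm_addT mu x zero Hmu).
rewrite (@pzr (hm_car A X)) in h. rewrite h.
transitivity (plus (scal mu (Hm x)) zero). f_equal. apply Hm_zero. apply (@pzr (hm_car B Y)).
Qed.

Lemma Hm_nat (n : nat) x : Hm (scal (RtoC (INR n)) x) = scal (RtoC (INR n)) (Hm x).
Proof.
induction n as [|n IH].
- simpl INR. rewrite !szl. apply Hm_zero.
- rewrite S_INR, !(sext (RtoC (INR n + 1)) (Cplus (RtoC (INR n)) (RtoC 1)))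
    by (apply injective_projections; simpl; ring).
  rewrite !sdr, !sc1, Hm_plus, IH. easy.
Qed.

Lemma Hm_real_small (r : R) x : 0 <= r <= 2 -> Hm (scal (RtoC r) x) = scal (RtoC r) (Hm x).
Proof.
intro Hr.
set (q := sqrt (1 - r * r / 4)).
assert (Hq : q * q = 1 - r * r / 4) by (apply sqrt_sqrt; nra).
set (m1 := (r / 2, q) : C). set (m2 := (r / 2, - q) : C).
assert (M1 : Cmod m1 = 1).
{ unfold Cmod, m1. simpl. replace (r / 2 * (r / 2 * 1) + q * (q * 1)) with 1 by nra. apply sqrt_1. }
assert (M2 : Cmod m2 = 1).
{ unfold Cmod, m2. simpl. replace (r / 2 * (r / 2 * 1) + - q * (- q * 1)) with 1 by nra. apply sqrt_1. }
assert (E : RtoC r = Cplus m1 m2) by (apply injective_projections; simpl; field).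
rewrite !(sext _ _ _ E), !sdr, Hm_plus, !Hm_scalT by assumption. easy.
Qed.

Lemma Hm_real (r : R) x : 0 <= r -> Hm (scal (RtoC r) x) = scal (RtoC r) (Hm x).
Proof.
intro Hr.
destruct (archimed r) as [H1 _].
set (N := Z.to_nat (up r)).
assert (EN : INR N = IZR (up r)).
{ unfold N. rewrite INR_IZR_INZ, Z2Nat.id. easy. apply le_IZR. lra. }
assert (PN : 0 < INR N) by lra.
assert (E : RtoC r = Cmult (RtoC (INR N)) (RtoC (r / INR N)))
  by (apply injective_projections; simpl; field; lra).
rewrite !(sext _ _ _ E), <- !sas, Hm_nat, Hm_real_small. easy.
split. apply Rmult_le_pos. lra. apply Rlt_le, Rinv_0_lt_compat; lra.
apply Rmult_le_reg_r with (INR N). lra. unfold Rdiv. rewrite Rmult_assoc, Rinv_l; lra.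
Qed.

Lemma Hm_lin (l : C) x : Hm (scal l x) = scal l (Hm x).
Proof.
destruct (Req_dec (Cmod l) 0) as [E|E].
- apply Cmod_eq_0 in E. rewrite E, !szl. apply Hm_zero.
- assert (P : 0 < Cmod l) by (generalize (Cmod_ge_0 l); lra).
  set (u := Cmult l (RtoC (/ Cmod l))).
  assert (Hu : Cmod u = 1).
  { unfold u. rewrite Cmod_mult, Cmod_R, Rabs_right. field; lra.
    apply Rle_ge, Rlt_le, Rinv_0_lt_compat; lra. }
  assert (El : l = Cmult (RtoC (Cmod l)) u).
  { unfold u. rewrite Cmult_comm, <- Cmult_assoc, <- RtoC_mult, Rinv_l by lra.
    rewrite Cmult_1_r. easy. }
  rewrite !(sext _ _ _ El), <- !sas, Hm_real, Hm_scalT by (auto; lra). easy.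
Qed.

Lemma Lpow_le n k : L ^ (n + k) <= L ^ n.
Proof.
rewrite pow_add. rewrite <- (Rmult_1_r (L ^ n)) at 2. apply Rmult_le_compat_l.
apply pow_le; lra. apply pow_le_1; lra.
Qed.

Lemma Hm_mult (gA : A -> A) (gB : B -> B)
  (gAs : forall r a, gA (scal (RtoC r) a) = scal (RtoC r) (gA a))
  (gBs : forall r a, gB (scal (RtoC r) a) = scal (RtoC r) (gB a))
  (gBadd : forall a b, gB (plus a b) = plus (gB a) (gB b))
  (gBn : forall a, norm (gB a) = norm a)
  (Hg : forall x y z, norm (minus (f (hm_act X (gA (hm_ip X x y)) z))
                                  (hm_act Y (gB (hm_ip Y (f x) (f y))) (f z))) <= phi x y z)
  (x y z : X) :
  Hm (hm_act X (gA (hm_ip X x y)) z) = hm_act Y (gB (hm_ip Y (Hm x) (Hm y))) (Hm z).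
Proof.
set (w := hm_act X (gA (hm_ip X x y)) z).
set (cw := phi w w zero / (2 - 2 * L)).
set (cx := phi x x zero / (2 - 2 * L)).
set (cy := phi y y zero / (2 - 2 * L)).
set (cz := phi z z zero / (2 - 2 * L)).
assert (Pc : forall v, 0 <= phi v v zero / (2 - 2 * L)).
{ intro v. apply Rmult_le_pos. apply phi_ge0. apply Rlt_le, Rinv_0_lt_compat. lra. }
set (al := norm (Hm x)). set (be := norm (Hm y)). set (ga := norm (Hm z)).
apply norm0_eq.
apply (small_pow L (cw + phi x y z + (4*(al+cx)*(be+cy)*cz + 4*cx*(be+cy)*ga + 4*al*cy*ga))). lra.
intro n.
set (m := (n + n + n)%nat).
set (t := 2 ^ n).
assert (Pt : 0 < t) by apply pow2_pos.
assert (Ln : 0 <= L ^ n <= 1) by (split; [apply pow_le|apply pow_le_1]; lra).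
eapply Rle_trans. apply (ntri _ _ (sn m w)).
eapply Rle_trans. apply Rplus_le_compat_l.
apply (ntri _ _ (hm_act Y (gB (hm_ip Y (sn n x) (sn n y))) (sn n z))).
assert (T1 : norm (minus (Hm w) (sn m w)) <= L ^ n * cw).
{ rewrite nsym. eapply Rle_trans. apply Hm_bound. unfold bnd, cw, m.
  rewrite <- Nat.add_assoc. unfold Rdiv. rewrite !Rmult_assoc.
  apply Rmult_le_compat_r. apply Pc. apply Lpow_le. }
assert (T2 : norm (minus (sn m w) (hm_act Y (gB (hm_ip Y (sn n x) (sn n y))) (sn n z)))
             <= L ^ n * phi x y z).
{ unfold sn. fold t.
  replace (2 ^ m) with (t * t * t) by (unfold m, t; rewrite !pow_add; ring).
  unfold w. rewrite <- (G_scal A X gA gAs t x y z).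
  rewrite (G_scal B Y gB gBs).
  replace (/ (t * t * t)) with (/ t * / t * / t) by (field; lra).
  rewrite <- (@smi (hm_car B Y)).
  eapply Rle_trans. apply nscalR.
  rewrite Rabs_right by (apply Rle_ge; repeat apply Rmult_le_pos; apply Rlt_le, Rinv_0_lt_compat; lra).
  eapply Rle_trans. apply Rmult_le_compat_l.
  repeat apply Rmult_le_pos; apply Rlt_le, Rinv_0_lt_compat; lra.
  eapply Rle_trans. apply Hg. apply phi_pow.
  rewrite pow_split. fold t.
  assert (Pp := phi_ge0 x y z). assert (PL : 0 <= L ^ n) by lra.
  replace (/ t * / t * / t * (t * L ^ n * phi x y z)) with ((/ t * / t) * (L ^ n * phi x y z)) by (field; lra).
  rewrite <- (Rmult_1_l (L ^ n * phi x y z)) at 2.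
  apply Rmult_le_compat_r. apply Rmult_le_pos; lra.
  assert (t1 : 1 <= t) by (unfold t; apply pow_R1_Rle; lra).
  assert (/ t <= 1) by (rewrite <- Rinv_1; apply Rinv_le_contravar; lra).
  assert (0 <= / t) by (apply Rlt_le, Rinv_0_lt_compat; lra). nra. }
assert (T3 : norm (minus (hm_act Y (gB (hm_ip Y (sn n x) (sn n y))) (sn n z))
                         (hm_act Y (gB (hm_ip Y (Hm x) (Hm y))) (Hm z)))
             <= L ^ n * (4*(al+cx)*(be+cy)*cz + 4*cx*(be+cy)*ga + 4*al*cy*ga)).
{ eapply Rle_trans. apply (tri_cont B Y gB gBadd gBn _ _ _ _ _ _ (L ^ n * cx) (L ^ n * cy) (L ^ n * cz)).
  1-3: eapply Rle_trans; [apply Hm_bound| right; unfold bnd, cx, cy, cz, Rdiv; ring].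
  fold al be ga. apply arith3; [exact Ln|apply nge0|apply nge0|apply nge0|apply Pc|apply Pc|apply Pc]. }
lra.
Qed.

Lemma Hm_unique (H' : X -> Y) (HH : forall (l : C) x, H' (scal l x) = scal l (H' x))
  (Hb : forall x, norm (minus (f x) (H' x)) <= / (2 - 2 * L) * phi x x zero) x :
  H' x = Hm x.
Proof.
apply norm0_eq.
apply (small_pow L (2 * (phi x x zero / (2 - 2 * L)))). lra.
intro n. set (t := 2 ^ n). assert (Pt : 0 < t) by apply pow2_pos.
set (v := scal (RtoC t) x).
assert (E : minus (H' x) (Hm x) = scal (RtoC (/ t)) (minus (H' v) (Hm v))).
{ unfold v. rewrite HH, Hm_lin, <- (@smi (hm_car B Y)), (@scR (hm_car B Y)), Rinv_l, (@sc1 (hm_car B Y)) by lra.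
  easy. }
rewrite E. eapply Rle_trans. apply nscalR.
rewrite Rabs_right by (apply Rle_ge, Rlt_le, Rinv_0_lt_compat; lra).
eapply Rle_trans. apply Rmult_le_compat_l. apply Rlt_le, Rinv_0_lt_compat; lra.
eapply Rle_trans. apply (ntri _ _ (f v)).
rewrite nsym. apply Rplus_le_compat; [apply Hb|apply Hm_approx].
assert (Q := phi_pow0 n x x). fold t v in Q.
assert (P := phi_ge0 x x zero).
assert (Pi : 0 < / (2 - 2 * L)) by (apply Rinv_0_lt_compat; lra).
apply Rle_trans with (/ t * (2 * / (2 - 2 * L) * ((2 * L) ^ n * phi x x zero))).
{ apply Rmult_le_compat_l. apply Rlt_le, Rinv_0_lt_compat; lra.
  replace (/ (2 - 2 * L) * phi v v zero + / (2 - 2 * L) * phi v v zero)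
    with (2 * / (2 - 2 * L) * phi v v zero) by ring.
  apply Rmult_le_compat_l. lra. exact Q. }
rewrite pow_split. fold t. right. field. lra.
Qed.

End Main.

Theorem theorem3p1 (A B : CStarAlgebra) (X : HilbertModule A) (Y : HilbertModule B)
  (f : X -> Y) (phi : X -> X -> X -> R)
  (phi_ge0 : forall x y z, 0 <= phi x y z)
  (Hadd : forall (mu : C) (x y : X), Cmod mu = 1 ->
     norm (minus (f (plus (scal mu x) y)) (plus (scal mu (f x)) (f y))) <= phi x y zero)
  (Hmul : forall x y z : X,
     norm (minus (f (hm_act X (hm_ip X x y) z)) (hm_act Y (hm_ip Y (f x) (f y)) (f z)))
       <= phi x y z)
  (Hstar : forall x y z : X,
     norm (minus (f (hm_act X (ca_star A (hm_ip X x y)) z))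
                 (hm_act Y (ca_star B (hm_ip Y (f x) (f y))) (f z)))
       <= phi x y z)
  (L : R) (HL0 : 0 <= L) (HL1 : L < 1)
  (Hphi : forall x y z : X,
     phi x y z <= 2 * L * phi (scal (RtoC (/ 2)) x) (scal (RtoC (/ 2)) y) (scal (RtoC (/ 2)) z)) :
  exists H : X -> Y,
    (is_hm_star_hom X Y H /\
     forall x : X, norm (minus (f x) (H x)) <= / (2 - 2 * L) * phi x x zero) /\
    (forall H' : X -> Y,
       is_hm_star_hom X Y H' /\
       (forall x : X, norm (minus (f x) (H' x)) <= / (2 - 2 * L) * phi x x zero) ->
       forall x, H' x = H x).
Proof.
exists (Hm A B X Y f).
split; [split|].
- split; [|split; [|split]].
  + apply (Hm_plus A B X Y f phi phi_ge0 Hadd L HL0 HL1 Hphi).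
  + apply (Hm_lin A B X Y f phi phi_ge0 Hadd L HL0 HL1 Hphi).
  + intros x y z.
    exact (Hm_mult A B X Y f phi phi_ge0 Hadd L HL0 HL1 Hphi (fun a => a) (fun a => a)
      (fun r a => eq_refl) (fun r a => eq_refl) (fun a b => eq_refl) (fun a => eq_refl) Hmul x y z).
  + intros x y z.
    apply (Hm_mult A B X Y f phi phi_ge0 Hadd L HL0 HL1 Hphi (ca_star A) (ca_star B)).
    * intros r a. rewrite ca_starZ, RtoC_conj. easy.
    * intros r a. rewrite ca_starZ, RtoC_conj. easy.
    * apply ca_starD.
    * apply norm_st.
    * exact Hstar.
- apply (Hm_approx A B X Y f phi phi_ge0 Hadd L HL0 HL1 Hphi).
- intros H' [[_ [HH _]] Hb] x.
  apply (Hm_unique A B X Y f phi phi_ge0 Hadd L HL0 HL1 Hphi H' HH Hb).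
Qed.
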